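(* Let $n=2p_1^{J_1}\cdots p_s^{J_s}$, where $s\ge2$, the $p_i$ are distinct odd primes, $J_i\ge1$, and $\prod_{i=1}^r p_i^{J_i}<p_{r+1}$ for every $r\in\{1,\dots,s-1\}$. Let $\mathcal{D}_1,\mathcal{D}_2$ be sets of positive divisors of $n$ such that (1) $\sum_{d\in\mathcal{D}_1,\,d\text{ odd}}\phi(n/d)=\sum_{d\in\mathcal{D}_2,\,d\text{ odd}}\phi(n/d)$, and (2) $\sum_{d\in\mathcal{D}_1,\,d\text{ even}}\phi(n/d)=\sum_{d\in\mathcal{D}_2,\,d\text{ even}}\phi(n/d)$. Then $\mathcal{D}_1=\mathcal{D}_2$.
   Context: $\phi$ is Euler's totient function. *)

(* Defs.v *)
From mathcomp Require Import all_boot.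
Set Implicit Arguments.
Unset Strict Implicit.
Unset Printing Implicit Defensive.

Definition phisum (n : nat) (D : pred nat) (b : bool) : nat :=
  \sum_(d <- divisors n | D d && (odd d == b)) totient (n %/ d).

(* Main.v *)
Require Import Defs.
From mathcomp Require Import all_boot zify.
From mathcomp Require Import cyclic.
Lemma superinc (s : seq nat) (w : nat -> nat) (A B : pred nat) :
  sorted ltn s ->
  (forall x, x \in s -> \sum_(y <- s | y < x) w y < w x) ->
  \sum_(y <- s | A y) w y = \sum_(y <- s | B y) w y ->
  forall x, x \in s -> A x = B x.
Proof.
elim/last_ind: s => [|s x IH] // srt H E.
have allx : all (fun y => y < x) s.
  move: srt; rewrite -rev_sorted rev_rcons /= => /(order_path_min _).
  by rewrite all_rev; apply => a b c /= h1 h2; apply: ltn_trans h2 h1.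
have srt' : sorted ltn s.
  by move: srt; rewrite -rev_sorted rev_rcons /= => /path_sorted; rewrite rev_sorted.
have sumlt : \sum_(y <- s) w y < w x.
  have := H x; rewrite mem_rcons inE eqxx => /(_ isT).
  rewrite big_rcons ltnn /= addn0 -big_filter (all_filterP allx) //.
have H' : forall z, z \in s -> \sum_(y <- s | y < z) w y < w z.
  move=> z zs; have := H z; rewrite mem_rcons inE zs orbT => /(_ isT).
  have zx : z < x by move/allP: allx => /(_ z zs).
  rewrite big_rcons (ltnNge x z) (ltnW zx) /= addn0 //.
have leA : forall P : pred nat, \sum_(y <- s | P y) w y <= \sum_(y <- s) w y.
  move=> P; rewrite big_mkcond /=; apply: leq_sum => i _; by case: (P i).
move: E; rewrite !big_rcons.
case Ax: (A x); case Bx: (B x) => /= E.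
- have E' := addIn E.
  move=> y; rewrite mem_rcons inE => /orP[/eqP-> | ys]; first by rewrite Ax Bx.
  exact: IH srt' H' E' y ys.
- have := leA B; lia.
- have := leA A; lia.
- rewrite !addn0 in E.
  move=> y; rewrite mem_rcons inE => /orP[/eqP-> | ys]; first by rewrite Ax Bx.
  exact: IH srt' H' E y ys.
Qed.

Lemma decomp m q K y : prime q -> coprime m q -> 0 < m -> y %| m * q ^ K ->
  exists2 b, b %| m & exists2 j, j <= K & y = b * q ^ j.
Proof.
move=> qp cop m0 dy.
have q0 : 0 < q by apply: prime_gt0.
have qK0 : 0 < q ^ K by rewrite expn_gt0 q0.
have M0 : 0 < m * q ^ K by rewrite muln_gt0 m0 qK0.
have y0 : 0 < y by apply: dvdn_gt0 dy.
have [b cqb yE] := pfactor_coprime qp y0.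
exists b; last first.
  exists (logn q y) => //.
  have LK : logn q (m * q ^ K) = K.
    rewrite (lognM _ m0 qK0).
    rewrite (logn_coprime (p:=q) (m:=m)); last by rewrite coprime_sym.
    by rewrite (pfactorK _ qp).
  rewrite -{1}LK -(pfactor_dvdn _ qp M0).
  exact: dvdn_trans (pfactor_dvdnn q y) dy.
have: b %| m * q ^ K by apply: dvdn_trans dy; rewrite {1}yE dvdn_mulr.
by rewrite Gauss_dvdl // coprimeXr // coprime_sym.
Qed.

Arguments decomp {m q K y}.

Lemma sum_sub (s t : seq nat) (P : pred nat) (F : nat -> nat) :
  uniq s -> uniq t -> (forall y, y \in s -> P y -> y \in t) ->
  \sum_(y <- s | P y) F y <= \sum_(y <- t) F y.
Proof.
move=> us ut sub; rewrite -big_filter.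
set u := filter P s.
rewrite [X in _ <= X](bigID (fun y => y \in u)) /=.
apply: leq_trans _ (leq_addr _ _).
suff ->: \sum_(y <- t | y \in u) F y = \sum_(y <- u) F y by [].
rewrite -big_filter; apply: perm_big.
apply: uniq_perm; rewrite ?filter_uniq //.
move=> y; rewrite mem_filter; case yu: (y \in u) => //=.
by move: yu; rewrite mem_filter => /andP[Py ys]; rewrite (sub y ys Py).
Qed.

Lemma sum_div N : 0 < N -> \sum_(y <- divisors N) totient y = N.
Proof.
move=> N0; rewrite -{2}(sum_totient_dvd N) -(big_mkord (fun d => d %| N)).
rewrite /index_iota subn0 -[RHS]big_filter.
apply: perm_big; apply: uniq_perm; rewrite ?divisors_uniq ?filter_uniq ?iota_uniq //.
move=> y; rewrite mem_filter mem_iota /= -dvdn_divisors //.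
case dy: (y %| N) => //=; rewrite add0n ltnS dvdn_leq //.
Qed.

Definition Cond M := forall x, x \in divisors M ->
  \sum_(y <- divisors M | y < x) totient y < totient x.

Lemma step m q K : 0 < m -> prime q -> m.+1 < q -> Cond m -> Cond (m * q ^ K).
Proof.
move=> m0 qp mq Cm x.
have q1 : 1 < q by apply: prime_gt1.
have q0 : 0 < q by lia.
have cop : coprime m q.
  rewrite coprime_sym prime_coprime //; apply/negP => /(dvdn_leq m0); lia.
have M0 : 0 < m * q ^ K by rewrite muln_gt0 m0 expn_gt0 q0.
rewrite -dvdn_divisors // => dx.
have [a am [k kK xE]] := decomp qp cop m0 dx.
have a0 : 0 < a by apply: dvdn_gt0 m0 am.
have aq : a < q by have := dvdn_leq m0 am; lia.
have qk0 : 0 < q ^ k by rewrite expn_gt0 q0.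
have cqk : forall b, b %| m -> coprime b (q ^ k).
  by move=> b bm; rewrite coprimeXr //; apply: coprime_dvdl bm cop.
rewrite xE (bigID (fun y => y < q ^ k)) /=.
set S1 := \sum_(y <- _ | _ && (y < q ^ k)) _.
set S2 := \sum_(y <- _ | _ && ~~ (y < q ^ k)) _.
have H2 : S2 = \sum_(b <- divisors m | b < a) totient b * totient (q ^ k).
  have -> : \sum_(b <- divisors m | b < a) totient b * totient (q^k) =
     \sum_(y <- map (fun b => b * q^k) [seq b <- divisors m | b < a]) totient y.
    rewrite big_map big_filter [RHS]big_seq_cond [LHS]big_seq_cond.
    apply: eq_bigr => b /andP[bm _]; rewrite totient_coprime // cqk //.
    by rewrite dvdn_divisors.
  rewrite /S2 -big_filter; apply: perm_big; apply: uniq_perm.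
  - by rewrite filter_uniq ?divisors_uniq.
  - rewrite map_inj_uniq ?filter_uniq ?divisors_uniq //.
    by move=> b1 b2 /eqP; rewrite eqn_pmul2r // => /eqP.
  move=> y; rewrite mem_filter -dvdn_divisors //; apply/idP/idP.
  + move=> /andP[/andP[ylt yge] dy].
    have [b bm [j jK yE]] := decomp qp cop m0 dy.
    have b0 : 0 < b by apply: dvdn_gt0 m0 bm.
    have bq : b < q by have := dvdn_leq m0 bm; lia.
    rewrite yE in ylt yge *.
    case: (ltngtP j k) => [jk|kj|jk].
    * have h1 : q ^ j.+1 <= q ^ k by apply: leq_pexp2l.
      rewrite expnS in h1.
      have h2 : b * q ^ j < q * q ^ j by rewrite ltn_pmul2r // expn_gt0 q0.
      by move: yge; rewrite (leq_trans h2 h1).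
    * have h1 : q ^ k.+1 <= q ^ j by apply: leq_pexp2l.
      rewrite expnS in h1.
      have h2 : a * q ^ k < q * q ^ k by rewrite ltn_pmul2r.
      have h3 : q ^ j <= b * q ^ j by apply: leq_pmull.
      lia.
    * rewrite jk in ylt *.
      apply/mapP; exists b => //; rewrite mem_filter -dvdn_divisors // bm andbT.
      by rewrite ltn_pmul2r in ylt.
  + case/mapP => b; rewrite mem_filter -dvdn_divisors // => /andP[ba bm] ->.
    have b0 : 0 < b by apply: dvdn_gt0 m0 bm.
    rewrite ltn_pmul2r // ba /= -leqNgt leq_pmull //=.
    by rewrite dvdn_mul // dvdn_exp2l.
have H1 : S1 < totient (q ^ k).
  case: (posnP k) => [k0|kpos].
    rewrite /S1 big1_seq; first by rewrite k0 expn0.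
    move=> y /andP[/andP[_ y1] yd]; move: y1; rewrite k0 expn0 ltnS leqn0 => /eqP y0.
    by move: yd; rewrite y0 -dvdn_divisors // dvd0n => /eqP M00; rewrite M00 in M0.
  apply: (@leq_ltn_trans (m * q ^ k.-1)).
    have N0 : 0 < m * q ^ k.-1 by rewrite muln_gt0 m0 expn_gt0 q0.
    rewrite -{1}(sum_div _ N0) /S1; apply: sum_sub; rewrite ?divisors_uniq //.
    move=> y; rewrite -!dvdn_divisors // => dy /andP[_ ylt].
    have [b bm [j jK yE]] := decomp qp cop m0 dy.
    have b0 : 0 < b by apply: dvdn_gt0 m0 bm.
    have jk : j <= k.-1.
      rewrite leqNgt; apply/negP => kj.
      have h1 : q ^ k <= q ^ j by apply: leq_pexp2l => //; lia.
      have h3 : q ^ j <= b * q ^ j by apply: leq_pmull.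
      lia.
    by rewrite yE dvdn_mul // dvdn_exp2l.
  rewrite totient_pfactor //= ltn_pmul2r ?expn_gt0 ?q0 //; lia.
have Ha := Cm a; rewrite -dvdn_divisors // in Ha; have {}Ha := Ha am.
rewrite totient_coprime ?cqk // H2 -big_distrl /=.
nia.
Qed.

Lemma divK m f : 0 < m -> f %| m -> m %/ (m %/ f) = f.
Proof.
move=> m0 fm; have f0 : 0 < f by apply: dvdn_gt0 m0 fm.
have q0 : 0 < m %/ f by rewrite divn_gt0 // dvdn_leq.
by rewrite -{1}(divnK fm) mulKn.
Qed.

Arguments divK {m f}.

Lemma prod_facts s (p J : nat -> nat) :
  (forall i, i < s -> prime (p i) /\ odd (p i) /\ 1 <= J i) ->
  (forall r, 1 <= r <= s - 1 -> \prod_(i < r) p i ^ J i < p r) ->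
  forall r, r <= s -> [/\ 0 < \prod_(i < r) p i ^ J i,
     odd (\prod_(i < r) p i ^ J i) & Cond (\prod_(i < r) p i ^ J i)].
Proof.
move=> hp hlt; elim=> [|r IH] rs.
  rewrite big_ord0; split => // x; rewrite (_ : divisors 1 = [:: 1]) //.
  by rewrite inE => /eqP ->; rewrite big_cons big_nil.
have [P0 Po PC] := IH (ltnW rs).
have [pp [po _]] := hp r rs.
rewrite big_ord_recr /=; split.
- by rewrite muln_gt0 P0 expn_gt0 prime_gt0.
- by rewrite oddM Po oddX po orbT.
apply: step => //.
have lt : \prod_(i < r) p i ^ J i < p r.
  case: r {IH P0 Po PC pp po} rs (hlt r) (hp r) => [rs _ h|r rs h _].
    by rewrite big_ord0; apply: prime_gt1; case: (h rs).
  by apply: h; lia.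
rewrite ltn_neqAle lt andbT; apply/negP => /eqP E; by move: po; rewrite -E /= Po.
Qed.

Lemma phisum_odd m (D : pred nat) : 0 < m -> odd m ->
  phisum (2 * m) D true = \sum_(f <- divisors m | D (m %/ f)) totient f.
Proof.
move=> m0 mo; have n0 : 0 < 2 * m by rewrite muln_gt0 m0.
rewrite /phisum (eq_bigl (fun d => odd d && D d)); last by move=> d; rewrite eqb_id andbC.
rewrite -big_filter_cond.
rewrite (perm_big (map (fun f => m %/ f) (divisors m))); last first.
  apply: uniq_perm; rewrite ?filter_uniq ?divisors_uniq //.
    rewrite map_inj_in_uniq ?divisors_uniq // => f1 f2.
    by rewrite -!dvdn_divisors // => h1 h2 E; rewrite -(divK m0 h1) E divK.
  move=> d; rewrite mem_filter -dvdn_divisors //; apply/andP/mapP.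
    case=> od dd; rewrite Gauss_dvdr ?coprimen2 // in dd.
    by exists (m %/ d); rewrite ?divK // -dvdn_divisors // dvdn_div.
  case=> f; rewrite -dvdn_divisors // => fm ->.
  have dm : m %/ f %| m by apply: dvdn_div.
  split; last by apply: dvdn_mull.
  by rewrite -coprimen2; apply: coprime_dvdl dm _; rewrite coprimen2.
rewrite big_map big_seq_cond [RHS]big_seq_cond; apply: eq_bigr => f /andP[fin _].
rewrite -dvdn_divisors // in fin.
have q0 : 0 < m %/ f by rewrite (divn_gt0 _ (dvdn_gt0 m0 fin)) (dvdn_leq m0 fin).
have fo : odd f by rewrite -coprimen2; apply: coprime_dvdl fin _; rewrite coprimen2.
by rewrite -{1}(divnK fin) mulnCA mulKn // totient_coprime ?coprime2n // totient_prime // mul1n.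
Qed.

Lemma phisum_even m (D : pred nat) : 0 < m -> odd m ->
  phisum (2 * m) D false = \sum_(f <- divisors m | D (2 * (m %/ f))) totient f.
Proof.
move=> m0 mo; have n0 : 0 < 2 * m by rewrite muln_gt0 m0.
rewrite /phisum (eq_bigl (fun d => ~~ odd d && D d)); last by move=> d; rewrite eqbF_neg andbC.
rewrite -big_filter_cond.
rewrite (perm_big (map (fun f => 2 * (m %/ f)) (divisors m))); last first.
  apply: uniq_perm; rewrite ?filter_uniq ?divisors_uniq //.
    rewrite map_inj_in_uniq ?divisors_uniq // => f1 f2.
    rewrite -!dvdn_divisors // => h1 h2 /eqP; rewrite eqn_pmul2l // => /eqP E.
    by rewrite -(divK m0 h1) E divK.
  move=> d; rewrite mem_filter -dvdn_divisors //; apply/andP/mapP.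
    case=> od dd.
    have d2 : 2 %| d by rewrite dvdn2.
    have dE : d = 2 * (d %/ 2) by rewrite mulnC divnK.
    have em : d %/ 2 %| m by rewrite -(@dvdn_pmul2l 2) // -dE.
    by exists (m %/ (d %/ 2)); rewrite ?divK // -dvdn_divisors // dvdn_div.
  case=> f; rewrite -dvdn_divisors // => fm ->.
  have dm : m %/ f %| m by apply: dvdn_div.
  by rewrite oddM /= dvdn_pmul2l.
rewrite big_map big_seq_cond [RHS]big_seq_cond; apply: eq_bigr => f /andP[fin _].
rewrite -dvdn_divisors // in fin.
by rewrite divnMl // divK.
Qed.

Theorem lemma3p5 (n s : nat) (p J : nat -> nat) (D1 D2 : pred nat) :
  2 <= s ->
  (forall i, i < s -> prime (p i) /\ odd (p i) /\ 1 <= J i) ->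
  (forall i j, i < s -> j < s -> p i = p j -> i = j) ->
  (forall r, 1 <= r <= s - 1 -> \prod_(i < r) p i ^ J i < p r) ->
  n = 2 * \prod_(i < s) p i ^ J i ->
  {subset D1 <= divisors n} ->
  {subset D2 <= divisors n} ->
  phisum n D1 true = phisum n D2 true ->
  phisum n D1 false = phisum n D2 false ->
  D1 =i D2.
Proof.
move=> s2 hp _ hlt nE sub1 sub2 E1 E2.
have [m0 mo Cm] := @prod_facts s p J hp hlt s (leqnn s).
move: nE sub1 sub2 E1 E2 m0 mo Cm.
set m := \prod_(i < s) p i ^ J i => nE sub1 sub2 E1 E2 m0 mo Cm.
have n0 : 0 < n by rewrite nE muln_gt0 m0.
rewrite nE phisum_odd // phisum_odd // in E1.
rewrite nE phisum_even // phisum_even // in E2.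
have F1 := superinc (divisors m) totient (fun f => D1 (m %/ f)) (fun f => D2 (m %/ f))
   (sorted_divisors_ltn m) Cm E1.
have F2 := superinc (divisors m) totient (fun f => D1 (2 * (m %/ f))) (fun f => D2 (2 * (m %/ f)))
   (sorted_divisors_ltn m) Cm E2.
move=> d; rewrite /in_mem /=.
case: (boolP (d %| n)) => dn.
  case: (boolP (odd d)) => od.
    have dm : d %| m by move: dn; rewrite nE Gauss_dvdr ?coprimen2.
    have := F1 (m %/ d); rewrite divK // => -> //.
    by rewrite -dvdn_divisors // dvdn_div.
  have d2 : 2 %| d by rewrite dvdn2.
  have dE : d = 2 * (d %/ 2) by rewrite mulnC divnK.
  have em : d %/ 2 %| m by rewrite -(@dvdn_pmul2l 2) // -dE -nE.
  have := F2 (m %/ (d %/ 2)); rewrite divK // -dE => -> //.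
  by rewrite -dvdn_divisors // dvdn_div.
have h1 : ~~ D1 d by apply/negP => /sub1; rewrite -dvdn_divisors // (negbTE dn).
have h2 : ~~ D2 d by apply/negP => /sub2; rewrite -dvdn_divisors // (negbTE dn).
by rewrite (negbTE h1) (negbTE h2).
Qed.
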